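(* Let $G$ be a finite simple graph with a normal spanning tree $T$ rooted at $r$ such that $G$ has no secant edges with respect to $T$, and suppose $T$ is a whip. Then $G$ has a proper $3$-coloring in which all leaves of $T$ (vertices of $T$ having no children) receive the same color.
   Context: For a tree $T$ rooted at $r$, write $y\le_T x$ if $y$ lies on the $rx$-path of $T$; the children (successors) of $x$ are its neighbors $z$ with $x\le_T z$. $T$ is normal in $G$ if for every edge $xy$ of $G$, $x\le_T y$ or $y\le_T x$. Two edges $e,e'$ of $G$ are secant with respect to $T$ if there is a path $P=x_1\dots x_n$ in $T$ with $x_1=r$ containing the ends of $e,e'$ such that, with respect to the enumeration $x_1\dots x_n$, both are jumps (an edge $x_ix_j$ with $|i-j|>1$) and, writing them $x_lx_m$, $x_px_q$ with $l<m$, $p<q$, we have $l<p<m<q$ or $p<l<q<m$. A star$^0$-like tree is a tree having exactly one vertex of degree strictly greater than $2$, called its node. A whip is a rooted star$^0$-like tree in which every child of its node is a leaf. *)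

(* Defs.v *)
From mathcomp Require Import all_boot.
Set Implicit Arguments. Unset Strict Implicit. Unset Printing Implicit Defensive.

Definition simple_graph (V : finType) (e : rel V) : Prop :=
  symmetric e /\ irreflexive e.

(* A rooted tree on V with root r, encoded by its parent function par:
   par r = r, and iterating par from any vertex reaches r.
   Tree edges are {x, par x} for x <> r. *)
Definition rooted_tree (V : finType) (par : V -> V) (r : V) : Prop :=
  par r = r /\ forall x : V, exists n : nat, iter n par x = r.

Definition tadj (V : finType) (par : V -> V) (r : V) (x y : V) : bool :=
  ((x != r) && (par x == y)) || ((y != r) && (par y == x)).

(* T is a spanning tree of G: every tree edge is an edge of G
   (all vertices of V are vertices of T). *)
Definition spanning_tree_of (V : finType) (e : rel V) (par : V -> V) (r : V) : Prop :=
  rooted_tree par r /\ forall x : V, tadj par r x (par x) -> e x (par x).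

(* y <=_T x : y lies on the r-x path of T (the path x, par x, ..., r). *)
Definition tle (V : finType) (par : V -> V) (y x : V) : Prop :=
  exists n : nat, iter n par x = y.

Definition normal_tree (V : finType) (e : rel V) (par : V -> V) : Prop :=
  forall x y : V, e x y -> tle par x y \/ tle par y x.

Definition tpath (V : finType) (par : V -> V) (r : V) (s : seq V) : Prop :=
  uniq s /\ forall i : nat, i.+1 < size s -> tadj par r (nth r s i) (nth r s i.+1).

(* G has two secant edges with respect to T: there is a path P = x_1 ... x_n
   in T with x_1 = r (0-indexed here) and two jumps x_l x_m, x_p x_q of G
   (l < m, p < q) with l < p < m < q or p < l < q < m. *)
Definition has_secant_edges (V : finType) (e : rel V) (par : V -> V) (r : V) : Prop :=
  exists (s : seq V) (l m p q : nat),
    [/\ tpath par r s /\ head r s = r /\ 0 < size s,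
        [/\ l < m, m < size s, l.+1 < m & e (nth r s l) (nth r s m)],
        [/\ p < q, q < size s, p.+1 < q & e (nth r s p) (nth r s q)] &
        ((l < p < m) && (m < q)) || ((p < l < q) && (q < m))].

Definition tdeg (V : finType) (par : V -> V) (r : V) (x : V) : nat :=
  #|[set z | tadj par r x z]|.

Definition tchild (V : finType) (par : V -> V) (r : V) (x z : V) : Prop :=
  tadj par r x z /\ tle par x z.

Definition tleaf (V : finType) (par : V -> V) (r : V) (x : V) : Prop :=
  forall z : V, ~ tchild par r x z.

Definition whip (V : finType) (par : V -> V) (r : V) : Prop :=
  exists v : V,
    [/\ 2 < tdeg par r v,
        (forall w : V, 2 < tdeg par r w -> w = v) &
        (forall z : V, tchild par r v z -> tleaf par r z)].

Definition proper_coloring (V : finType) (e : rel V) (k : nat) (c : V -> 'I_k) : Prop :=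
  forall x y : V, e x y -> c x != c y.

(* Main.v *)
Require Import Defs.
From mathcomp Require Import all_boot.
From mathcomp Require Import zify.
From Stdlib Require Import Lia.
Set Implicit Arguments. Unset Strict Implicit. Unset Printing Implicit Defensive.

Lemma third_color (a b : 'I_3) : exists g : 'I_3, g != a /\ g != b.
Proof.
case: a b => [[|[|[|//]]] ?] [[|[|[|//]]] ?].
all: first [ by exists (@Ordinal 3 0 isT) | by exists (@Ordinal 3 1 isT) | by exists (@Ordinal 3 2 isT) ].
Qed.

Section Interval.
Variable E : nat -> nat -> bool.

Definition nocross a b := forall i j p q, a <= i -> i < p -> p < j -> j < q -> q <= b ->
  E i j -> E p q -> False.

Definition properc a b (c : nat -> 'I_3) := forall i j, a <= i -> i < j -> j <= b -> E i j -> c i != c j.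

Lemma color_interval d : forall a b, b - a <= d -> a <= b -> nocross a b ->
  forall al be : 'I_3, (a = b -> al = be) -> (E a b -> al != be) ->
  exists c, [/\ c a = al, c b = be & properc a b c].
Proof.
elim: d => [|d IH] a b hd hab hnc al be h1 h2.
  have eab : a = b by apply/eqP; rewrite eqn_leq hab -subn_eq0 -leqn0.
  subst b; exists (fun _ => al); split => //; first exact: h1.
  move=> i j hi hij hj; exfalso; lia.
have [eab|nab] := eqVneq a b.
  subst b; exists (fun _ => al); split => //; first exact: h1.
  move=> i j hi hij hj; exfalso; lia.
have [eb|nb] := eqVneq b a.+1.
  subst b; exists (fun i => if i <= a then al else be); split => //.
  - by rewrite leqnn.
  - by rewrite ltnn.
  move=> i j hi hij hj; have ei : i = a by lia.
  have ej : j = a.+1 by lia.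
  subst i j; rewrite leqnn ltnn => /h2; by [].
pose P := fun j => (a < j < b) && ((j == a.+1) || E a j).
have exP : exists j, P j by exists a.+1; rewrite /P eqxx /=; apply/andP; split => //; lia.
have bP : forall j, P j -> j <= b by move=> j /andP[/andP[_ /ltnW]].
case: (ex_maxnP exP bP) => m Pm maxm.
move: (Pm) => /andP[/andP[am mb] Pm'].
have [g [ga gb]] := third_color al be.
have [c1 [c1a c1m pc1]] : exists c, [/\ c a = al, c m = g & properc a m c].
  apply: IH => //; try lia.
  - move=> i j p q ? ? ? ? ?; apply: hnc => //; lia.
  - by rewrite eq_sym.
have [c2 [c2m c2b pc2]] : exists c, [/\ c m = g, c b = be & properc m b c].
  apply: IH => //; try lia.
  move=> i j p q ? ? ? ? ?; apply: hnc => //; lia.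
exists (fun i => if i <= m then c1 i else c2 i); split.
- by rewrite ifT ?c1a //; lia.
- by rewrite ifF ?c2b //; apply/negbTE; rewrite -ltnNge.
move=> i j hi hij hj Eij; cbv beta.
case: (leqP j m) => jm.
  by rewrite (_ : i <= m); [apply: pc1 => // | lia].
have jm' : (j <= m) = false by apply/negbTE; rewrite -ltnNge.

case: (leqP m i) => mi.
  have [ei|ni] := eqVneq i m.
    by subst i; rewrite leqnn c1m -c2m; apply: pc2 => //.
  have im' : (i <= m) = false by apply/negbTE; rewrite -ltnNge; lia.
  by rewrite im'; apply: pc2 => //; lia.
rewrite (_ : i <= m); last by lia.
have [ei|ni] := eqVneq i a.
  subst i; have [ej|nj] := eqVneq j b.
    by subst j; rewrite c1a c2b; apply: h2.
  have : P j by rewrite /P Eij orbT andbT; apply/andP; split; lia.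
  move/maxm; lia.
exfalso; move: Pm'; case/orP => [/eqP ema|Eam].
  lia.
apply: (hnc a m i j) => //; lia.
Qed.
End Interval.

Section Whip.
Variables (V : finType) (par : V -> V) (r : V).
Hypothesis parr : par r = r.
Hypothesis reach : forall x : V, exists n : nat, iter n par x = r.
Lemma reachb x : exists n, iter n par x == r.
Proof. by case: (reach x) => n h; exists n; apply/eqP. Qed.

Definition depth x := ex_minn (reachb x).

Lemma iter_r n : iter n par r = r.
Proof. by elim: n => //= n ->. Qed.

Lemma depthP x : iter (depth x) par x = r.
Proof. rewrite /depth; by case: ex_minnP => n /eqP. Qed.

Lemma depth_min x n : iter n par x = r -> depth x <= n.
Proof. rewrite /depth; case: ex_minnP => m _ h /eqP; exact: h. Qed.

Lemma iter_ge x n : depth x <= n -> iter n par x = r.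
Proof.
move=> h; rewrite -(subnK h) iterD depthP; exact: iter_r.
Qed.

Lemma iter_lt x n : n < depth x -> iter n par x != r.
Proof. by move=> h; apply/eqP => /depth_min; rewrite leqNgt h. Qed.

Lemma periodic x p : 0 < p -> iter p par x = x -> x = r.
Proof.
move=> hp hx.
have h : forall t, iter (p * t) par x = x.
  elim=> [|t IH]; first by rewrite muln0.
  by rewrite mulnS iterD IH hx.
have : depth x <= p * depth x by rewrite leq_pmull.
move/iter_ge; by rewrite h.
Qed.

Lemma depth_r : depth r = 0.
Proof. by apply/eqP; rewrite -leqn0; apply: depth_min. Qed.

Lemma depth0 x : depth x = 0 -> x = r.
Proof. by move=> h; have := depthP x; rewrite h. Qed.

Lemma depth_par x : x != r -> depth x = (depth (par x)).+1.
Proof.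
move=> nx; apply/eqP; rewrite eqn_leq; apply/andP; split.
  by apply: depth_min; rewrite iterSr depthP.
have : 0 < depth x by rewrite lt0n; apply/eqP => /depth0 /eqP; rewrite (negbTE nx).
case hd: (depth x) => [//|n] _.
apply: depth_min; rewrite -iterSr -hd; exact: depthP.
Qed.

Lemma depth_iter x i : i <= depth x -> depth (iter i par x) = depth x - i.
Proof.
elim: i => [|i IH] hi; first by rewrite subn0.
rewrite iterS.
have hne : iter i par x != r by apply: iter_lt.
have := depth_par hne; rewrite IH; last by apply: ltnW.
lia.
Qed.

Definition path_to x := mkseq (fun j => iter (depth x - j) par x) (depth x).+1.

Lemma size_path x : size (path_to x) = (depth x).+1.
Proof. by rewrite size_mkseq. Qed.

Lemma nth_path x j : j <= depth x -> nth r (path_to x) j = iter (depth x - j) par x.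
Proof. by move=> h; rewrite nth_mkseq. Qed.

Lemma iter_inj x a b : a <= depth x -> b <= depth x -> iter a par x = iter b par x -> a = b.
Proof.
wlog ab : a b / a <= b.
  move=> W ha hb h; case: (leqP a b) => hab; first exact: W.
  by symmetry; apply: W => //; apply: ltnW.
move=> ha hb h; apply/eqP; rewrite eqn_leq ab /=; rewrite leqNgt; apply/negP => lt.
have : iter (depth x - b + a) par x = r.
  by rewrite iterD h -iterD subnK // depthP.
by apply/eqP/iter_lt; lia.
Qed.

Lemma uniq_path x : uniq (path_to x).
Proof.
rewrite /path_to /mkseq map_inj_in_uniq ?iota_uniq //.
move=> i j; rewrite !mem_iota /= !add0n !ltnS => hi hj /iter_inj h.
have := h (leq_subr _ _) (leq_subr _ _); lia.
Qed.

Lemma mem_path y x : (y \in path_to x) <-> tle par y x.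
Proof.
split.
  by case/mapP => j _ ->; exists (depth x - j).
case=> n hn.
case: (leqP n (depth x)) => h.
  apply/mapP; exists (depth x - n); first by rewrite mem_iota; lia.
  by rewrite subKn.
have -> : y = r by rewrite -hn iter_ge // ltnW.
apply/mapP; exists 0; first by rewrite mem_iota.
by rewrite subn0 depthP.
Qed.

Lemma head_path x : head r (path_to x) = r.
Proof. by rewrite -nth0 nth_path // subn0 depthP. Qed.

Lemma r_in_path x : r \in path_to x.
Proof. by rewrite -(head_path x) -nth0 mem_nth // size_path. Qed.

Lemma path_step x j : j < depth x ->
  nth r (path_to x) j.+1 != r /\ par (nth r (path_to x) j.+1) = nth r (path_to x) j.
Proof.
move=> h; rewrite !nth_path //; last exact: ltnW.
split; first by apply: (iter_lt (x := x)); lia.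
by rewrite -iterS; have -> : (depth x - j.+1).+1 = depth x - j by lia.
Qed.

Lemma tpath_path x : tpath par r (path_to x).
Proof.
split; first exact: uniq_path.
move=> i; rewrite size_path ltnS => h.
have [h1 h2] := path_step h.
by rewrite /tadj h1 h2 eqxx orbT.
Qed.

Lemma child_path x j : j < depth x ->
  tchild par r (nth r (path_to x) j) (nth r (path_to x) j.+1).
Proof.
move=> h; have [h1 h2] := path_step h.
split; first by rewrite /tadj h1 h2 eqxx orbT.
by exists 1.
Qed.

Lemma tle_trans a b c : tle par a b -> tle par b c -> tle par a c.
Proof. by case=> n hn [m hm]; exists (n + m); rewrite iterD hm. Qed.

Lemma tle_par a x : tle par a x -> a != x -> tle par a (par x).
Proof.
case=> [[|n] hn] hax; first by rewrite /= in hn; rewrite hn eqxx in hax.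
by exists n; rewrite -iterSr.
Qed.

Variable v : V.
Hypothesis hv3 : 2 < tdeg par r v.
Hypothesis hvu : forall w, 2 < tdeg par r w -> w = v.
Hypothesis hvl : forall z, tchild par r v z -> tleaf par r z.

Notation sx := (path_to v).
Notation k := (depth v).
Definition ch z := (z != r) && (par z == v).
Definition Bv x := (x \notin sx) && ~~ ch x.

Lemma deg3 u a b c : a != b -> a != c -> b != c ->
  tadj par r u a -> tadj par r u b -> tadj par r u c -> u = v.
Proof.
move=> ab ac bc ha hb hc; apply: hvu; rewrite /tdeg.
have sub : [set a; b; c] \subset [set z | tadj par r u z].
  by apply/subsetP => z; rewrite !inE => /orP[/orP[]|] /eqP ->.
apply: leq_trans (subset_leq_card sub).
by rewrite -setUA cardsU1 cards2 !inE negb_or ab ac bc.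
Qed.

Lemma v_child : exists z, ch z.
Proof.
case: (pickP ch) => [z hz|h]; first by exists z.
exfalso.
have : [set z | tadj par r v z] \subset [set par v].
  apply/subsetP => z; rewrite !inE /tadj.
  have := h z; rewrite /ch => ->; rewrite orbF => /andP[_ /eqP ->] //.
move/subset_leq_card; rewrite cards1 => h1.
by move: hv3; rewrite /tdeg; lia.
Qed.

Lemma nth_sx_k : nth r sx k = v.
Proof. by rewrite nth_path // subnn. Qed.

Lemma nth_sx_0 : nth r sx 0 = r.
Proof. by rewrite nth_path // subn0 depthP. Qed.

Lemma v_in_sx : v \in sx.
Proof. by rewrite -{1}nth_sx_k mem_nth // size_path. Qed.

Lemma r_in_sx : r \in sx.
Proof. exact: r_in_path. Qed.

Lemma B_neq_r x : Bv x -> x != r.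
Proof. by case/andP => h _; apply/eqP => e; rewrite e r_in_sx in h. Qed.

Lemma ch_notin z : ch z -> z \notin sx.
Proof.
case/andP => nz /eqP pz; apply/negP => /mem_path [n hn].
move/eqP: nz; apply; apply: (periodic (p := n.+1)) => //.
by rewrite iterSr pz.
Qed.

Lemma ch_child z : ch z -> tchild par r v z.
Proof. case/andP => nz pz; split; first by rewrite /tadj nz pz orbT. by exists 1; apply/eqP. Qed.

Lemma leaf_notin x : tleaf par r x -> x \notin sx.
Proof.
move=> hl; apply/negP => hx.
have hi : index x sx < (depth v).+1 by rewrite -(size_path v) index_mem.
have ex := nth_index r hx.
case: (ltnP (index x sx) k) => h.
  by apply: (hl (nth r sx (index x sx).+1)); rewrite -{1}ex; apply: child_path.
have ixk : index x sx = k by lia.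
have [z hz] := v_child.
apply: (hl z); rewrite -ex ixk nth_sx_k; exact: ch_child.
Qed.

Lemma S0 x : Bv x -> par x != r -> Bv (par x).
Proof.
move=> hB npx; have nx := B_neq_r hB.
move: (hB) => /andP[xs nchx].
case: (boolP (par x \in sx)) => hin; last first.
  rewrite /Bv hin /=; apply/negP => chp.
  have hl := hvl (ch_child chp); apply: (hl x); split; first by rewrite /tadj nx eqxx orbT.
  by exists 1.
exfalso.
set a := par x in hin npx.
set j := index a sx.
have hj : j < (depth v).+1 by rewrite -(size_path v) index_mem.
have ea : nth r sx j = a by apply: nth_index.
case: (ltnP j k) => hjk; last first.
  have : j = k by lia.
  move=> ejk; rewrite ejk nth_sx_k in ea.
  by move/negP: nchx; apply; rewrite /ch nx -/a ea eqxx.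
have j0 : 0 < j by rewrite lt0n; apply/eqP => j0; rewrite j0 nth_sx_0 in ea; rewrite ea eqxx in npx.
have [w1 w2] := path_step hjk.
have [p1 p2] := @path_step v j.-1 ltac:(lia).
rewrite prednK // in p1 p2.
set w := nth r (path_to v) j.+1 in w1 w2.
have win : w \in sx by rewrite mem_nth // size_path ltnS.
have pin : par a \in sx by rewrite -ea p2 mem_nth // size_path ltnS (leq_trans (leq_pred _) (ltnW hjk)).
have : a = v.
  apply: (deg3 (a := x) (b := w) (c := par a)).
  - by apply/eqP => e; rewrite e win in xs.
  - by apply/eqP => e; rewrite e pin in xs.
  - apply/eqP => e.
    have : nth r sx j.+1 = nth r sx j.-1 by rewrite -/w e -ea p2.
    move/eqP; rewrite nth_uniq ?size_path ?uniq_path //; clear -j0 hjk; lia.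
  - by rewrite /tadj nx eqxx orbT.
  - by rewrite /tadj w1 w2 ea eqxx orbT.
  - by rewrite /tadj npx eqxx.
move=> av; move/negP: nchx; apply; by rewrite /ch nx -/a av eqxx.
Qed.


Lemma iter2 u : par (par u) = u -> u = r.
Proof. by move=> h; apply: (periodic (p := 2)). Qed.

Lemma Br x x' : Bv x -> Bv x' -> par x = r -> par x' = r -> x = x'.
Proof.
move=> hx hx' px px'; apply/eqP; apply/negPn/negP => nxx.
have nx := B_neq_r hx; have nx' := B_neq_r hx'.
move: (hx) (hx') => /andP[xs nchx] /andP[xs' nchx'].
have [evr|nvr] := eqVneq v r.
  by move/negP: nchx; apply; rewrite /ch nx px evr eqxx.
have k0 : 0 < k by rewrite lt0n; apply/eqP => /depth0 h; rewrite h eqxx in nvr.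
have [w1 w2] := @path_step v 0 k0.
rewrite nth_sx_0 in w2.
set w := nth r sx 1 in w1 w2.
have win : w \in sx by rewrite mem_nth // size_path ltnS.
have : r = v.
  apply: (deg3 (a := x) (b := x') (c := w)) => //.
  - by apply/eqP => e; rewrite e win in xs.
  - by apply/eqP => e; rewrite e win in xs'.
  - by rewrite /tadj nx px eqxx orbT.
  - by rewrite /tadj nx' px' eqxx orbT.
  - by rewrite /tadj w1 w2 eqxx orbT.
by move=> e; rewrite e eqxx in nvr.
Qed.

Lemma Bu u x x' : Bv u -> Bv x -> Bv x' -> par x = u -> par x' = u -> x = x'.
Proof.
move=> hu hx hx' px px'; apply/eqP; apply/negPn/negP => nxx.
have nu := B_neq_r hu; have nx := B_neq_r hx; have nx' := B_neq_r hx'.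
have : u = v.
  apply: (deg3 (a := x) (b := x') (c := par u)) => //.
  - apply/eqP => e; have := iter2 (u := u); rewrite -e px => /(_ erefl) eu.
    by rewrite eu eqxx in nu.
  - apply/eqP => e; have := iter2 (u := u); rewrite -e px' => /(_ erefl) eu.
    by rewrite eu eqxx in nu.
  - by rewrite /tadj nx px eqxx orbT.
  - by rewrite /tadj nx' px' eqxx orbT.
  - by rewrite /tadj nu eqxx.
move=> e; move: hu; rewrite /Bv e v_in_sx; by [].
Qed.

Lemma B_level d : forall x x', Bv x -> Bv x' -> depth x = d -> depth x' = d -> x = x'.
Proof.
elim: d => [|d IH] x x' hx hx' dx dx'.
  by move: (B_neq_r hx); rewrite (depth0 dx) eqxx.
have nx := B_neq_r hx; have nx' := B_neq_r hx'.
have dpx := depth_par nx; have dpx' := depth_par nx'.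
case: (eqVneq (par x) r) => px.
  have d0 : d = 0 by move: dpx; rewrite px depth_r dx; case.
  have px' : par x' = r by apply: depth0; move: dpx'; rewrite dx' d0; case.
  exact: Br.
have px' : par x' != r.
  apply/eqP => e; move: dpx'; rewrite e depth_r dx' => -[d0].
  by move: dpx; rewrite dx d0 => -[] /esym /depth0 hh; rewrite hh eqxx in px.
have hp := S0 hx px; have hp' := S0 hx' px'.
have epp : par x = par x' by apply: IH => //; [move: dpx; rewrite dx; case | move: dpx'; rewrite dx'; case].
exact: (Bu hp hx hx' erefl (esym epp)).
Qed.

Lemma B_anc y i : Bv y -> iter i par y != r -> Bv (iter i par y).
Proof.
move=> hy; elim: i => [//|i IH] hi.
have hi' : iter i par y != r by apply/eqP => e; move: hi; rewrite iterS e parr eqxx.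
by rewrite iterS; apply: S0; [apply: IH | rewrite -iterS].
Qed.


Variable e : rel V.
Hypothesis hsym : symmetric e.
Hypothesis eirr : irreflexive e.
Hypothesis hnorm : normal_tree e par.
Hypothesis hnosec : ~ has_secant_edges e par r.
Variable y0 : V.
Hypothesis hy0 : (Bv y0 /\ forall y, Bv y -> depth y <= depth y0) \/ (y0 = r /\ forall y, ~~ Bv y).
Notation sb := (path_to y0).

Lemma sb_B x : x \in sb -> x != r -> Bv x.
Proof.
move=> /mem_path [n hn] nx; case: hy0 => [[hB _]|[e0 _]].
  by rewrite -hn; apply: B_anc => //; rewrite hn.
by move: nx; rewrite -hn e0 iter_r eqxx.
Qed.

Lemma S1 x : Bv x -> x \in sb.
Proof.
move=> hx; case: hy0 => [[hB hmax]|[_ hn]]; last by rewrite (negbTE (hn x)) in hx.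
have dx := hmax x hx.
set a := iter (depth y0 - depth x) par y0.
have da : depth a = depth x by rewrite /a depth_iter ?leq_subr //; lia.
have na : a != r.
  apply/eqP => ea; move: da; rewrite ea depth_r => /esym /depth0 ex.
  by move: (B_neq_r hx); rewrite ex eqxx.
have ha : Bv a by apply: B_anc.
have <- : a = x by apply: (B_level (d := depth x)).
by apply/mem_path; exists (depth y0 - depth x).
Qed.

Lemma S2 x : x \in sb -> x \in sx -> x = r.
Proof.
move=> hb hs; apply/eqP; apply/negPn/negP => nx.
by move: (sb_B hb nx); rewrite /Bv hs.
Qed.

Lemma secant s i j p q : tpath par r s -> head r s = r -> i < p -> p < j -> j < q ->
  q < size s -> e (nth r s i) (nth r s j) -> e (nth r s p) (nth r s q) -> False.
Proof.
move=> tp hd ip pj jq qs e1 e2; apply: hnosec.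
exists s, i, j, p, q; split.
- by split => //; split => //; lia.
- by split => //; lia.
- by split => //; lia.
by rewrite ip pj jq.
Qed.

Lemma seq_proper (s : seq V) b (E : nat -> nat -> bool) col : uniq s -> size s <= b.+1 ->
  (forall i j, i < j -> j < size s -> E i j = e (nth r s i) (nth r s j)) ->
  properc E 0 b col -> forall x y, x \in s -> y \in s -> e x y ->
  col (index x s) != col (index y s).
Proof.
move=> us sz hE pc.
suff W : forall x y, x \in s -> y \in s -> e x y -> index x s < index y s ->
    col (index x s) != col (index y s).
  move=> x y hx hy exy.
  case: (ltngtP (index x s) (index y s)) => h; first exact: W.
    by rewrite eq_sym; apply: W => //; rewrite hsym.
  have : x = y by rewrite -(nth_index r hx) h nth_index.
  by move=> exy'; rewrite exy' eirr in exy.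
move=> x y hx hy exy lt.
have hyi : index y s < size s by rewrite index_mem.
apply: pc => //; first lia.
by rewrite hE // !nth_index.
Qed.


Definition zero3 : 'I_3 := @Ordinal 3 0 isT.
Definition one3 : 'I_3 := @Ordinal 3 1 isT.

Definition Ex i j := if j <= k then e (nth r sx i) (nth r sx j)
  else [exists z, ch z && e (nth r sx i) z].
Definition Eb i j := e (nth r sb i) (nth r sb j).

Lemma nth0_path x : nth r (path_to x) 0 = r.
Proof. by rewrite nth0 head_path. Qed.

Lemma index_r x : index r (path_to x) = 0.
Proof. by rewrite -{1}(nth0_path x) index_uniq ?uniq_path ?size_path. Qed.

Lemma nocross_x : nocross Ex 0 k.+1.
Proof.
move=> i j p q _ ip pj jq qk E1 E2.
have jk : j <= k by lia.
rewrite /Ex jk in E1.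
case: (leqP q k) => qk'.
  rewrite /Ex qk' in E2.
  apply: (secant (s := sx) (i := i) (j := j) (p := p) (q := q)) => //.
  - exact: tpath_path.
  - exact: head_path.
  - by rewrite size_path.
rewrite /Ex (negbTE (_ : ~~ (q <= k))) in E2; last by rewrite -ltnNge.
case/existsP: E2 => z /andP[chz ez].
have qe : q = k.+1 by lia.
have nth_s : forall t, t <= k -> nth r (rcons sx z) t = nth r sx t.
  by move=> t ht; rewrite nth_rcons size_path ltnS ht.
have nth_z : nth r (rcons sx z) k.+1 = z.
  by rewrite nth_rcons size_path ltnn eqxx.
apply: (secant (s := rcons sx z) (i := i) (j := j) (p := p) (q := q)) => //.
- split; first by rewrite rcons_uniq ch_notin ?uniq_path.
  move=> t; rewrite size_rcons size_path ltnS => ht.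
  case: (ltnP t.+1 k.+1) => h.
    rewrite !nth_s; [|lia|lia].
    by case: (tpath_path v) => _; apply; rewrite size_path.
  have tk : t = k by lia.
  rewrite tk nth_z nth_s // nth_sx_k /tadj.
  by case/andP: chz => -> ->; rewrite orbT.
- by rewrite -nth0 nth_s // nth0_path.
- by rewrite size_rcons size_path; lia.
- by rewrite !nth_s //; lia.
- by rewrite qe nth_z nth_s //; lia.
Qed.

Lemma nocross_b : nocross Eb 0 (depth y0).
Proof.
move=> i j p q _ ip pj jq qk E1 E2.
apply: (secant (s := sb) (i := i) (j := j) (p := p) (q := q)) => //.
- exact: tpath_path.
- exact: head_path.
- by rewrite size_path.
Qed.

Lemma whip_color : exists c : V -> 'I_3,
  proper_coloring e c /\ forall x, tleaf par r x -> c x = one3.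
Proof.
have [cx [cx0 cx1 pcx]] := @color_interval Ex k.+1 0 k.+1 (leq_subr _ _) (leq0n _)
  nocross_x zero3 one3 (fun h : 0 = k.+1 => False_ind _ (O_S k h))
  (fun _ => isT).
set be := if depth y0 == 0 then zero3 else one3.
have [cb [cb0 cb1 pcb]] : exists c, [/\ c 0 = zero3, c (depth y0) = be & properc Eb 0 (depth y0) c].
  apply: (@color_interval Eb (depth y0)) => //.
  - by rewrite subn0.
  - exact: nocross_b.
  - by move=> h; rewrite /be -h.
  - rewrite /Eb; case: (eqVneq (depth y0) 0) => [->|nz]; last by rewrite /be (negbTE nz).
    by rewrite eirr.
pose c x := if x \in sx then cx (index x sx) else if x \in sb then cb (index x sb) else one3.
have cS : forall x, x \in sx -> c x = cx (index x sx) by move=> x hx; rewrite /c hx.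
have cB : forall x, x \in sb -> c x = cb (index x sb).
  move=> x hx; rewrite /c hx; case: ifP => // hs.
  by rewrite (S2 hx hs) !index_r cx0 cb0.
have cC : forall y, ch y -> c y = one3.
  move=> y chy; rewrite /c (negbTE (ch_notin chy)); case: ifP => // hb.
  have ny : y != r by case/andP: chy.
  by move: (sb_B hb ny); rewrite /Bv chy andbF.
exists c; split; last first.
  move=> x hl; rewrite /c (negbTE (leaf_notin hl)); case: ifP => // hb.
  have hi : index x sb < (depth y0).+1 by rewrite -(size_path y0) index_mem.
  have ex := nth_index r hb.
  case: (ltnP (index x sb) (depth y0)) => h.
    by exfalso; apply: (hl (nth r sb (index x sb).+1)); rewrite -{1}ex; apply: child_path.
  have -> : index x sb = depth y0 by lia.
  rewrite cb1 /be; case: eqP => // d0.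
  move: ex; rewrite (_ : index x sb = 0); last by lia.
  rewrite nth0_path => exr.
  by move: (leaf_notin hl); rewrite -exr r_in_path.
suff W : forall x y, tle par x y -> e x y -> c x != c y.
  move=> x y exy; case: (hnorm exy) => h; first exact: W.
  by rewrite eq_sym; apply: W => //; rewrite hsym.
move=> x y hxy exy.
have nxy : x != y by apply/eqP => exy'; rewrite exy' eirr in exy.
case: (boolP (y \in sx)) => ys.
  have xs : x \in sx by apply/mem_path; apply: (tle_trans hxy); apply/mem_path.
  rewrite !cS //; apply: (seq_proper (b := k.+1) (E := Ex)) => //.
  - exact: uniq_path.
  - by rewrite size_path.
  - by move=> i j ij; rewrite size_path ltnS => jk; rewrite /Ex jk.
case: (boolP (ch y)) => chy.
  have xs : x \in sx.
    apply/mem_path; case/andP: chy => _ /eqP <-; exact: tle_par.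
  rewrite cS // cC // -cx1; apply: pcx => //.
  - by rewrite ltnS -ltnS -(size_path v) index_mem.
  - rewrite /Ex ltnn; apply/existsP; exists y; by rewrite chy nth_index.
have yB : Bv y by rewrite /Bv ys chy.
have yb := S1 yB.
have xb : x \in sb by apply/mem_path; apply: (tle_trans hxy); apply/mem_path.
rewrite !cB //; apply: (seq_proper (b := depth y0) (E := Eb)) => //.
- exact: uniq_path.
- by rewrite size_path.
Qed.

End Whip.

Theorem proposition4 (V : finType) (e : rel V) (par : V -> V) (r : V) :
  simple_graph e ->
  spanning_tree_of e par r ->
  normal_tree e par ->
  ~ has_secant_edges e par r ->
  whip par r ->
  exists c : V -> 'I_3,
    proper_coloring e c /\
    (forall x y : V, tleaf par r x -> tleaf par r y -> c x = c y).
Proof.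
move=> [hsym hirr] [[parr reach] _] hnorm hnosec [v [hv3 hvu hvl]].
have key : forall y0, (Bv reach v y0 /\ forall y, Bv reach v y -> depth reach y <= depth reach y0) \/
    (y0 = r /\ forall y, ~~ Bv reach v y) ->
  exists c : V -> 'I_3,
    proper_coloring e c /\
    (forall x y : V, tleaf par r x -> tleaf par r y -> c x = c y).
  move=> y0 hy0.
  have [c [pc hl]] := whip_color parr hv3 hvu hvl hsym hirr hnorm hnosec hy0.
  by exists c; split => // x y hx hy; rewrite !hl.
case: (pickP (Bv reach v)) => [b hb | hn].
  case: (arg_maxnP (depth reach) hb) => y0 hy0 hmax.
  by apply: (key y0); left.
by apply: (key r); right; split => // y; rewrite hn.
Qed.
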